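(* Let $\delta\geq0$, $0\leq2\theta<\alpha$, $\varepsilon>0$ with $\varepsilon^{\alpha-2\theta}=\frac14$, and $$\lambda_\pm=\frac{|\xi|^{2\theta}}{2(1+|\xi|^{2\delta})}\left(-1\pm\sqrt{1-4|\xi|^{2(\alpha-2\theta)}(1+|\xi|^{2\delta})}\right).$$ If $|\xi|<\varepsilon$ then: (i) $-4(2-\sqrt2)|\xi|^{2(\alpha-\theta)}\leq\lambda_+\leq-|\xi|^{2(\alpha-\theta)}$ (so $\lambda_+\approx-|\xi|^{2(\alpha-\theta)}$); (ii) $-|\xi|^{2\theta}\leq\lambda_-\leq-\frac14\left(1+\frac1{\sqrt2}\right)|\xi|^{2\theta}$ (so $\lambda_-\approx-|\xi|^{2\theta}$); (iii) $\lambda_+-\lambda_-\approx|\xi|^{2\theta}$.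
   Context: $g\approx f$ means $g\lesssim f$ and $f\lesssim g$, where $f\lesssim g$ means $0\leq f\leq Cg$ for a constant $C>0$ independent of $\xi$ (for negative quantities, $\lambda\approx-h$ means $-\lambda\approx h$). *)

(* Defs.v *)
From mathcomp Require Import all_boot all_order all_algebra.
From mathcomp Require Import all_classical all_reals all_analysis.
Set Implicit Arguments. Unset Strict Implicit. Unset Printing Implicit Defensive.
Import Order.TTheory GRing.Theory Num.Theory.
Local Open Scope ring_scope.

Definition enorm (R : realType) (n : nat) (xi : 'rV[R]_n) : R :=
  Num.sqrt (\sum_(i < n) xi ord0 i ^+ 2).

(* lambda_{+/-} with real powers via powR (convention 0 `^ 0 = 1). *)
Definition lam_pm (R : realType) (s : R) (delta theta alpha : R) (r : R) : R :=
  r `^ (2 * theta) / (2 * (1 + r `^ (2 * delta))) *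
  (-1 + s * Num.sqrt (1 - 4 * r `^ (2 * (alpha - 2 * theta)) * (1 + r `^ (2 * delta)))).

Definition lam_plus (R : realType) (delta theta alpha : R) (n : nat) (xi : 'rV[R]_n) : R :=
  lam_pm 1 delta theta alpha (enorm xi).
Definition lam_minus (R : realType) (delta theta alpha : R) (n : nat) (xi : 'rV[R]_n) : R :=
  lam_pm (-1) delta theta alpha (enorm xi).

(* Main.v *)
From mathcomp Require Import all_boot all_order all_algebra.
From mathcomp Require Import all_classical all_reals all_analysis.
From mathcomp Require Import ring lra.
Import Order.TTheory GRing.Theory Num.Theory.
Local Open Scope ring_scope.

Lemma core (R : realType) (Y q p : R) :
  0 <= Y -> 0 <= q -> 0 <= p -> p <= 1 -> q <= 16^-1 ->
  let s := Num.sqrt (1 - 4 * q * (1 + p)) in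
  let t := Num.sqrt (2:R) in
  [/\ - 4 * (2 - t) * (Y * q) <= Y / (2 * (1 + p)) * (-1 + 1 * s),
      Y / (2 * (1 + p)) * (-1 + 1 * s) <= - (Y * q),
      - Y <= Y / (2 * (1 + p)) * (-1 + -1 * s),
      Y / (2 * (1 + p)) * (-1 + -1 * s) <= - (4^-1 * (1 + t^-1)) * Y &
      4^-1 * Y <= Y / (2 * (1 + p)) * (-1 + 1 * s) - Y / (2 * (1 + p)) * (-1 + -1 * s)
      /\ Y / (2 * (1 + p)) * (-1 + 1 * s) - Y / (2 * (1 + p)) * (-1 + -1 * s) <= 1 * Y].
Proof.
move=> hY hq hp0 hp1 hq16 s t.
have hD : 2^-1 <= 1 - 4 * q * (1 + p) by nra.
have hD1 : 1 - 4 * q * (1 + p) <= 1 by nra.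
have hs0 : 0 <= s by rewrite sqrtr_ge0.
have hs2 : s ^+ 2 = 1 - 4 * q * (1 + p) by rewrite sqr_sqrtr //; lra.
have ht0 : 0 <= t by rewrite sqrtr_ge0.
have ht2 : t ^+ 2 = 2 by rewrite sqr_sqrtr.
have ht1 : 1 <= t by nra.
have hst : 1 <= s * t by nra.
have hs1 : s <= 1 by nra.
have htinv : t^-1 <= s.
  by rewrite -[t^-1]mul1r ler_pdivrMr; lra.
set c := Y / (2 * (1 + p)).
have hc0 : 0 <= c by rewrite /c divr_ge0 //; lra.
have hYc : Y = c * (2 * (1 + p)) by rewrite /c mulfVK //; lra.
rewrite hYc.
split.
-
  have h4q : 4 * q * (1 + p) = 1 - s^+2 by lra.
  have ht2' : t <= 2 by nra.
  have key : 0 <= (1 - s) * (2 * (2 - t) * (1 + s) - 1).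
    apply: mulr_ge0; first lra.
    have : 1 <= (2 - t) * (1 + s) * t by nra.
    nra.
  have h5 : c * (2 - t) * (4 * q * (1 + p)) = c * (2 - t) * (1 - s^+2) by rewrite h4q.
  have h6 := mulr_ge0 hc0 key.
  nra.
- have h4q : 4 * q * (1 + p) = 1 - s^+2 by lra.
  have h5 : c * (4 * q * (1 + p)) = c * (1 - s^+2) by rewrite h4q.
  have h6 : 0 <= c * ((1 - s) ^+ 2) by apply: mulr_ge0 => //; apply: sqr_ge0.
  nra.
- nra.
- have : 4^-1 * (1 + t^-1) <= 2^-1 * (1 + s) / (1 + p).
    rewrite ler_pdivlMr; last lra.
    nra.
  move=> h.
  have e : c * (-1 + -1 * s) = - (2^-1 * (1 + s) / (1 + p)) * (c * (2 * (1 + p))).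
    field. lra.
  rewrite e. apply: ler_wpM2r; [nra| lra].
- split; nra.
Qed.

Require Import Defs.

Theorem lemma2p2 (R : realType) (n : nat) (delta theta alpha eps : R)
  (hdelta : 0 <= delta) (htheta : 0 <= 2 * theta) (hta : 2 * theta < alpha)
  (heps : 0 < eps) (heps4 : eps `^ (alpha - 2 * theta) = 4^-1) :
  (forall xi : 'rV[R]_n, enorm xi < eps ->
     (- 4 * (2 - Num.sqrt 2) * enorm xi `^ (2 * (alpha - theta))
        <= lam_plus delta theta alpha xi
      /\ lam_plus delta theta alpha xi <= - enorm xi `^ (2 * (alpha - theta)))
  /\ (- enorm xi `^ (2 * theta) <= lam_minus delta theta alpha xi
      /\ lam_minus delta theta alpha xi
           <= - (4^-1 * (1 + (Num.sqrt 2)^-1)) * enorm xi `^ (2 * theta)))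
  /\ (exists c C : R, 0 < c /\ 0 < C /\
       forall xi : 'rV[R]_n, enorm xi < eps ->
         c * enorm xi `^ (2 * theta)
           <= lam_plus delta theta alpha xi - lam_minus delta theta alpha xi
         /\ lam_plus delta theta alpha xi - lam_minus delta theta alpha xi
           <= C * enorm xi `^ (2 * theta)).
Proof.
set a := alpha - 2 * theta.
have ha : 0 < a by rewrite /a; lra.
have heps1 : eps < 1.
  rewrite ltNge; apply/negP => h.
  have := ler_powR h (ltW ha); rewrite powRr0 heps4; lra.
have H : forall r : R, 0 <= r -> r < eps ->
  let s := Num.sqrt (1 - 4 * r `^ (2 * a) * (1 + r `^ (2 * delta))) in
  let t := Num.sqrt (2:R) in
  let Y := r `^ (2 * theta) in let p := r `^ (2 * delta) in
  [/\ - 4 * (2 - t) * r `^ (2 * (alpha - theta)) <= Y / (2 * (1 + p)) * (-1 + 1 * s),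
      Y / (2 * (1 + p)) * (-1 + 1 * s) <= - r `^ (2 * (alpha - theta)),
      - Y <= Y / (2 * (1 + p)) * (-1 + -1 * s),
      Y / (2 * (1 + p)) * (-1 + -1 * s) <= - (4^-1 * (1 + t^-1)) * Y &
      4^-1 * Y <= Y / (2 * (1 + p)) * (-1 + 1 * s) - Y / (2 * (1 + p)) * (-1 + -1 * s)
      /\ Y / (2 * (1 + p)) * (-1 + 1 * s) - Y / (2 * (1 + p)) * (-1 + -1 * s) <= 1 * Y].
  move=> r hr0 hr s t Y p.
  have hX : r `^ (2 * (alpha - theta)) = Y * r `^ (2 * a).
    rewrite /Y -powRD; first by congr (_ `^ _); rewrite /a; ring.
    apply/implyP => /eqP h; exfalso; rewrite /a in h; lra.
  rewrite hX.
  have hra : r `^ a <= 4^-1.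
    rewrite -heps4; apply: ge0_ler_powR; rewrite ?nnegrE; lra.
  have hq : r `^ (2 * a) <= 16^-1.
    rewrite mulrC powRrM powR_mulrn ?powR_ge0 //.
    have := powR_ge0 r a; nra.
  have hp1 : p <= 1.
    have e1 : (1:R) `^ (2 * delta) = 1 by rewrite powR1.
    rewrite /p -[X in _ <= X]e1; apply: ge0_ler_powR; rewrite ?nnegrE; lra.
  by apply: core; rewrite ?powR_ge0.
split.
- move=> xi hxi.
  have := H (enorm xi) (sqrtr_ge0 _) hxi.
  rewrite /lam_plus /lam_minus /lam_pm /=.
  by case=> h1 h2 h3 h4 _.
- exists 4^-1, 1; split; first lra. split; first lra.
  move=> xi hxi.
  have := H (enorm xi) (sqrtr_ge0 _) hxi.
  rewrite /lam_plus /lam_minus /lam_pm /=.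
  by case=> h1 h2 h3 h4 h5.
Qed.
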